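(* Fix integers $N\ge 2$ and $b_0\ge 1$ and a real number $m>1$, and set $q_k = 2/(2b_0 m^k-1)$ for $k\ge 0$. For each $K\in\{1,2,\dots\}$, let $\gamma=\gamma(K)\in(0,1)$ denote the solution of the fixed point equations $$\bar p=\frac{\sum_{k=0}^{K}\gamma^k}{\sum_{k=0}^{K}\gamma^k/q_k},\qquad \gamma=1-e^{-(N-1)\bar p}.$$ Then there exists a finite $K_0$ such that $\gamma(K_0)<1/m$, and $\gamma(K)$ is decreasing in $K$ for $K\ge K_0$. Consequently: (i) there exists $K_0$ such that $\gamma<1/m$ for all $K\ge K_0$, including $K=\infty$ (where $\gamma$ for $K=\infty$ is the limit of $\gamma(K)$ as $K\to\infty$); (ii) for $K=\infty$ the mean $\bar\Omega=\mathbb{E}[\Omega]=\sum_{k=0}^{\infty}\gamma^k/q_k$ of the per-packet backoff is finite.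
   Context: This models the backoff of IEEE 802.11 with $N$ saturated nodes, backoff stages $0,\dots,K$, multiplicative factor $m$ and initial contention window $2b_0$; $q_k$ is the attempt probability in stage $k$, $\bar p$ the average attempt rate and $\gamma$ the collision probability. The per-packet backoff is $\Omega=\sum_{k=0}^{\kappa}B_k$, where $B_k$ is the backoff value drawn at stage $k$ (mean $1/q_k$) and $\kappa$ is the highest stage reached by the packet, with $\mathbb{P}[\kappa=k]=\gamma^k-\gamma^{k+1}$ for $k<K$ and $\mathbb{P}[\kappa=K]=\gamma^K$; its mean is $\bar\Omega=\sum_{k=0}^{K}\gamma^k/q_k$. *)

(* Defs.v *)
From Stdlib Require Import Reals.
From Coquelicot Require Import Coquelicot.
Open Scope R_scope.

(* q_k = 2 / (2 b0 m^k - 1): attempt probability in backoff stage k *)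
Definition q (b0 : nat) (m : R) (k : nat) : R :=
  2 / (2 * INR b0 * m ^ k - 1).

(* average attempt rate pbar = (sum_{k=0}^K g^k) / (sum_{k=0}^K g^k / q_k)
   (sum_f_R0 f K = f 0 + ... + f K) *)
Definition pbar (b0 : nat) (m : R) (K : nat) (g : R) : R :=
  sum_f_R0 (fun k => g ^ k) K / sum_f_R0 (fun k => g ^ k / q b0 m k) K.

Definition is_fixed_point (N b0 : nat) (m : R) (K : nat) (g : R) : Prop :=
  0 < g < 1 /\ g = 1 - exp (- (INR N - 1) * pbar b0 m K g).

(* Main.v *)
Require Import Defs.
From Stdlib Require Import Reals.
From Coquelicot Require Import Coquelicot.
From Stdlib Require Import Lra Lia Psatz ZArith.
Open Scope R_scope.

Definition A (K : nat) (g : R) := sum_f_R0 (fun k => g ^ k) K.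
Definition D (w : nat -> R) (K : nat) (g : R) := sum_f_R0 (fun k => g ^ k * w k) K.
Definition wq (b0 : nat) (m : R) (k : nat) := INR b0 * m ^ k - 1 / 2.

Lemma wq_ge (b0 : nat) (m : R) k : (1 <= b0)%nat -> 1 < m -> 1/2 <= wq b0 m k.
Proof.
  intros Hb Hm. unfold wq. assert (1 <= INR b0) by (apply (le_INR 1); lia).
  assert (1 <= m ^ k) by (apply pow_R1_Rle; lra). nra.
Qed.

Lemma wq_lt (b0 : nat) (m : R) i j : (1 <= b0)%nat -> 1 < m -> (i < j)%nat ->
  wq b0 m i < wq b0 m j.
Proof.
  intros Hb Hm Hij. unfold wq. assert (1 <= INR b0) by (apply (le_INR 1); lia).
  assert (m ^ i < m ^ j) by (apply Rlt_pow; [lra|exact Hij]). nra.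
Qed.

Lemma pbar_eq (b0 : nat) (m : R) K g : (1 <= b0)%nat -> 1 < m ->
  pbar b0 m K g = A K g / D (wq b0 m) K g.
Proof.
  intros Hb Hm. unfold pbar, A, D. f_equal. apply sum_eq. intros i _.
  unfold q, wq. assert (1 <= INR b0) by (apply (le_INR 1); lia).
  assert (1 <= m ^ i) by (apply pow_R1_Rle; lra).
  field. nra.
Qed.

Lemma sum_pos (f : nat -> R) K : (forall k, 0 < f k) -> 0 < sum_f_R0 f K.
Proof.
  intros H. induction K; simpl. apply H. specialize (H (S K)). lra.
Qed.

Lemma A_pos K g : 0 < g -> 0 < A K g.
Proof. intros. unfold A. apply sum_pos. intros. apply pow_lt; lra. Qed.

Lemma D_pos w K g : 0 < g -> (forall k, 0 < w k) -> 0 < D w K g.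
Proof. intros. unfold D. apply sum_pos. intros. apply Rmult_lt_0_compat; auto. apply pow_lt; lra. Qed.

Lemma key_id w n g g' L :
  g ^ n * D w L g' + g' ^ n * w n * A L g - (g' ^ n * D w L g + g ^ n * w n * A L g')
  = sum_f_R0 (fun j => (w n - w j) * (g' ^ n * g ^ j - g ^ n * g' ^ j)) L.
Proof.
  unfold A, D. induction L; simpl. ring. rewrite <- IHL. ring.
Qed.

Lemma mono w K g g' : (forall i j, (i <= j)%nat -> w i <= w j) -> 0 < g <= g' ->
  A K g' * D w K g <= A K g * D w K g'.
Proof.
  intros Hw Hg. induction K.
  - unfold A, D; simpl. lra.
  - assert (key : 0 <= sum_f_R0 (fun j => (w (S K) - w j) * (g' ^ (S K) * g ^ j - g ^ (S K) * g' ^ j)) K).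
    { replace 0 with (sum_f_R0 (fun _ => 0) K).
      2:{ rewrite sum_cte. ring. }
      apply sum_Rle. intros j Hj.
      apply Rmult_le_pos. assert (w j <= w (S K)) by (apply Hw; lia). lra.
      replace (S K) with ((S K - j) + j)%nat by lia. rewrite !pow_add.
      assert (g ^ (S K - j) <= g' ^ (S K - j)) by (apply pow_incr; lra).
      assert (0 <= g ^ j) by (apply pow_le; lra).
      assert (0 <= g' ^ j) by (apply pow_le; lra).
      assert (0 <= g ^ j * g' ^ j) by (apply Rmult_le_pos; auto).
      nra. }
    rewrite <- key_id in key.
    change (A (S K) g') with (A K g' + g' ^ S K).
    change (A (S K) g) with (A K g + g ^ S K).
    change (D w (S K) g') with (D w K g' + g' ^ S K * w (S K)).
    change (D w (S K) g) with (D w K g + g ^ S K * w (S K)).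
    set (n := S K) in *.
    assert (E : (A K g + g ^ n) * (D w K g' + g' ^ n * w n) - (A K g' + g' ^ n) * (D w K g + g ^ n * w n)
      = (A K g * D w K g' - A K g' * D w K g) + (g ^ n * D w K g' + g' ^ n * w n * A K g -
        (g' ^ n * D w K g + g ^ n * w n * A K g'))) by ring.
    lra.
Qed.

Lemma strict_D w g n : 0 < g -> forall L, (L < n)%nat ->
  (forall j, (j < n)%nat -> w j < w n) -> D w L g < A L g * w n.
Proof.
  intros Hg L. induction L; intros HL Hw; unfold A, D in *; simpl.
  - specialize (Hw 0%nat HL). lra.
  - assert (IH := IHL ltac:(lia) Hw). assert (Hl := Hw (S L) HL).
    assert (0 < g * g ^ L) by (apply Rmult_lt_0_compat; [lra|apply pow_lt; lra]).
    nra.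
Qed.

Lemma geo_ser_dummy : True. Proof. exact I. Qed.

Lemma geo_ser : forall (b0 : nat) (m l : R), 0 <= l -> l < 1/m -> 1 < m -> ex_series (fun k => l ^ k * (INR b0 * m ^ k - 1/2)).
intros b0 m l H0 H1 Hm.
apply (ex_series_ext (fun k => plus (scal (INR b0) ((l*m)^k)) (opp (scal (1/2) (l^k))))).
{ intros k. rewrite Rpow_mult_distr. unfold plus, scal, opp; simpl. unfold mult; simpl. ring. }
apply (ex_series_minus (fun k => scal (INR b0) ((l*m)^k)) (fun k => scal (1/2) (l^k))).
- apply (ex_series_scal (INR b0) (fun k => (l*m)^k)).
  exists (/ (1 - l*m)). apply is_series_geom. rewrite Rabs_pos_eq.
  apply (Rmult_lt_reg_r (/m)). apply Rinv_0_lt_compat; lra. rewrite Rmult_assoc, Rinv_r; lra.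
  apply Rmult_le_pos; lra.
- apply (ex_series_scal (1/2) (fun k => l^k)).
  exists (/ (1 - l)). apply is_series_geom. rewrite Rabs_pos_eq. 
  assert (1/m < 1). { apply (Rmult_lt_reg_r m); [lra|]. field_simplify; lra. } lra. lra.
Qed.

Theorem lemma1 (N b0 : nat) (m : R) (gamma : nat -> R)
  (HN : (2 <= N)%nat) (Hb0 : (1 <= b0)%nat) (Hm : 1 < m)
  (Hgamma : forall K : nat, (1 <= K)%nat -> is_fixed_point N b0 m K (gamma K)) :
  (exists K0 : nat, (1 <= K0)%nat /\ gamma K0 < 1 / m /\
     forall K : nat, (K0 <= K)%nat -> gamma (S K) < gamma K)
  /\
  (exists K0 : nat, (1 <= K0)%nat /\
     (forall K : nat, (K0 <= K)%nat -> gamma K < 1 / m) /\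
     exists ginf : R, is_lim_seq gamma ginf /\ ginf < 1 / m /\
       ex_series (fun k => ginf ^ k / q b0 m k)).
Proof.
  assert (HN1 : 1 <= INR N - 1).
  { assert (2 <= INR N) by (apply (le_INR 2); lia). lra. }
  assert (Hwpos : forall k, 0 < wq b0 m k).
  { intros k. assert (H := wq_ge b0 m k Hb0 Hm). lra. }
  assert (Hdec : forall K, (1 <= K)%nat -> gamma (S K) < gamma K).
  { intros K HK.
    destruct (Hgamma K HK) as [Hg1 Hg2].
    destruct (Hgamma (S K) ltac:(lia)) as [Hg1' Hg2'].
    rewrite pbar_eq in Hg2, Hg2' by assumption.
    set (g := gamma K) in *. set (g' := gamma (S K)) in *.
    destruct (Rlt_or_le g' g) as [Hlt | Hle]; auto. exfalso.
    assert (M1 := mono (wq b0 m) K g g' ltac:(intros; destruct (le_lt_eq_dec _ _ H) as [h|h];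
       [apply Rlt_le, wq_lt; auto | subst; lra]) ltac:(lra)).
    assert (M2 := strict_D (wq b0 m) g' (S K) ltac:(lra) K ltac:(lia)
        ltac:(intros; apply wq_lt; auto)).
    assert (HA := A_pos K g ltac:(lra)). assert (HA' := A_pos K g' ltac:(lra)).
    assert (HD := D_pos (wq b0 m) K g ltac:(lra) Hwpos).
    assert (HD' := D_pos (wq b0 m) K g' ltac:(lra) Hwpos).
    assert (Hb : 0 < g' ^ S K) by (apply pow_lt; lra).
    assert (HDw : D (wq b0 m) K g < A K g * wq b0 m (S K)).
    { assert (A K g' * D (wq b0 m) K g < A K g' * (A K g * wq b0 m (S K))) by nra.
      nra. }
    assert (Hp : A (S K) g' / D (wq b0 m) (S K) g' < A K g / D (wq b0 m) K g).
    { change (A (S K) g') with (A K g' + g' ^ S K).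
      change (D (wq b0 m) (S K) g') with (D (wq b0 m) K g' + g' ^ S K * wq b0 m (S K)).
      set (b := g' ^ S K) in *. set (wn := wq b0 m (S K)) in *.
      set (a' := A K g') in *. set (a := A K g) in *.
      set (d' := D (wq b0 m) K g') in *. set (d := D (wq b0 m) K g) in *.
      assert (0 < b * wn) by (apply Rmult_lt_0_compat; [exact Hb | apply Hwpos]).
      assert (X1 : b * d < b * (a * wn)) by (apply Rmult_lt_compat_l; auto).
      assert (X : (a' + b) * d < a * (d' + b * wn)) by nra.
      apply (Rmult_lt_reg_r ((d' + b * wn) * d)). nra.
      replace ((a' + b) / (d' + b * wn) * ((d' + b * wn) * d)) with ((a' + b) * d) by (field; lra).
      replace (a / d * ((d' + b * wn) * d)) with (a * (d' + b * wn)) by (field; lra).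
      exact X. }
    assert (exp (- (INR N - 1) * (A K g / D (wq b0 m) K g)) <
            exp (- (INR N - 1) * (A (S K) g' / D (wq b0 m) (S K) g'))).
    { apply exp_increasing. nra. }
    lra. }
  set (E := exp (2 * (INR N - 1))).
  assert (HE : 0 < E) by apply exp_pos.
  set (r := 2 * m * E * (INR N - 1)).
  destruct (archimed r) as [Hr _].
  assert (Hrpos : 0 < r) by (unfold r; assert (0 < m * E) by (apply Rmult_lt_0_compat; lra); nra).
  set (K0 := S (Z.to_nat (up r))).
  assert (HK0 : r < INR K0 + 1).
  { unfold K0. rewrite S_INR. rewrite INR_IZR_INZ. rewrite Z2Nat.id. lra.
    apply le_IZR. lra. }
  assert (HK0lt : gamma K0 < 1 / m).
  { destruct (Hgamma K0 ltac:(unfold K0; lia)) as [Hg1 Hg2].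
    rewrite pbar_eq in Hg2 by assumption.
    set (g := gamma K0) in *.
    destruct (Rlt_or_le g (1/m)) as [Hlt | Hge]; auto. exfalso.
    assert (HA := A_pos K0 g ltac:(lra)).
    assert (HD := D_pos (wq b0 m) K0 g ltac:(lra) Hwpos).
    assert (HDA : A K0 g / 2 <= D (wq b0 m) K0 g).
    { unfold A, D. replace (sum_f_R0 (fun k => g ^ k) K0 / 2) with
        (sum_f_R0 (fun k => g ^ k * (1/2)) K0).
      2:{ rewrite <- scal_sum. change (fun k : nat => g ^ k) with (pow g). field. }
      apply sum_Rle. intros. apply Rmult_le_compat_l. apply pow_le; lra.
      apply wq_ge; auto. }
    set (p := A K0 g / D (wq b0 m) K0 g) in *.
    assert (Hp2 : p <= 2).
    { unfold p. apply (Rmult_le_reg_r (D (wq b0 m) K0 g)); auto.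
      unfold Rdiv. rewrite Rmult_assoc, Rinv_l; lra. }
    assert (Hp0 : 0 < p) by (unfold p; apply Rdiv_lt_0_compat; auto).
    assert (H1g : / E <= 1 - g).
    { unfold E. rewrite <- exp_Ropp.
      assert (exp (- (2 * (INR N - 1))) <= exp (- (INR N - 1) * p)).
      { destruct (Rle_lt_or_eq_dec (- (2 * (INR N - 1))) (- (INR N - 1) * p)) as [h|h].
        nra. apply Rlt_le, exp_increasing; auto. rewrite h; lra. }
      lra. }
    assert (HAE : A K0 g <= E).
    { assert (GP := GP_finite g K0). fold (A K0 g) in GP.
      assert (0 < g ^ (K0 + 1)) by (apply pow_lt; lra).
      assert (A K0 g * (1 - g) <= 1) by lra.
      assert (0 < /E) by (apply Rinv_0_lt_compat; auto).
      assert (A K0 g * / E <= 1) by nra.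
      apply (Rmult_le_reg_r (/E)); auto. rewrite Rinv_r; lra. }
    assert (HDK : (INR K0 + 1) / 2 <= D (wq b0 m) K0 g).
    { unfold D. replace ((INR K0 + 1) / 2) with (sum_f_R0 (fun _ => 1/2) K0).
      2:{ rewrite sum_cte, S_INR. field. }
      apply sum_Rle. intros k _. unfold wq.
      assert (1 <= INR b0) by (apply (le_INR 1); lia).
      assert (1 <= (g * m) ^ k) by (apply pow_R1_Rle; apply (Rmult_le_reg_r (/m));
        [apply Rinv_0_lt_compat; lra| rewrite Rmult_assoc, Rinv_r; lra]).
      rewrite Rpow_mult_distr in H0.
      assert (g ^ k <= 1) by (rewrite <- (pow1 k); apply pow_incr; lra).
      assert (0 <= g ^ k) by (apply pow_le; lra).
      nra. }
    assert (Hpb : p <= 2 * E / (INR K0 + 1)).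
    { unfold p. assert (0 < INR K0 + 1) by (pose proof (pos_INR K0); lra).
      assert (/ D (wq b0 m) K0 g <= / ((INR K0 + 1) / 2)).
      { apply Rinv_le_contravar; lra. }
      replace (2 * E / (INR K0 + 1)) with (E * / ((INR K0 + 1) / 2)) by (field; lra).
      unfold Rdiv. apply Rmult_le_compat; try lra. apply Rlt_le, Rinv_0_lt_compat; auto. }
    assert (Hgp : g <= (INR N - 1) * p).
    { pose proof (exp_ineq1_le (- (INR N - 1) * p)). lra. }
    assert ((INR N - 1) * p <= (INR N - 1) * (2 * E / (INR K0 + 1))) by nra.
    assert (0 < INR K0 + 1) by (pose proof (pos_INR K0); lra).
    assert ((INR N - 1) * (2 * E / (INR K0 + 1)) < 1 / m).
    { apply (Rmult_lt_reg_r (m * (INR K0 + 1))). nra.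
      field_simplify; try lra. unfold r in HK0. lra. }
    lra. }
  assert (Hle : forall d, gamma (d + K0)%nat <= gamma K0).
  { induction d. simpl; lra. apply Rle_trans with (gamma (d + K0)%nat); auto.
    change (S d + K0)%nat with (S (d + K0)). apply Rlt_le, Hdec. unfold K0; lia. }
  assert (Hlt : forall K, (K0 <= K)%nat -> gamma K < 1 / m).
  { intros K HK. replace K with ((K - K0) + K0)%nat by lia.
    eapply Rle_lt_trans; [apply Hle | exact HK0lt]. }
  split.
  - exists K0. split; [unfold K0; lia|]. split; auto. intros K HK. apply Hdec. unfold K0 in *; lia.
  - exists K0. split; [unfold K0; lia|]. split; auto.
    set (u := fun n => gamma (n + K0)%nat).
    assert (Hpos : forall n, 0 <= u n).
    { intros n. unfold u. destruct (Hgamma (n + K0)%nat ltac:(unfold K0; lia)) as [[h _] _]. lra. }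
    destruct (ex_finite_lim_seq_decr u 0) as [l Hl].
    { intros n. unfold u. change (S n + K0)%nat with (S (n + K0)). apply Rlt_le, Hdec. unfold K0; lia. }
    { exact Hpos. }
    exists l. split.
    { apply (is_lim_seq_incr_n gamma K0). exact Hl. }
    assert (Hl1 : Rbar_le l (gamma K0)).
    { apply (is_lim_seq_le u (fun _ => gamma K0)); [exact Hle | exact Hl | apply is_lim_seq_const]. }
    assert (Hl0 : Rbar_le 0 l).
    { apply (is_lim_seq_le (fun _ => 0) u); [exact Hpos | apply is_lim_seq_const | exact Hl]. }
    simpl in Hl1, Hl0.
    assert (l < 1/m) by lra. split; auto.
    apply (ex_series_ext (fun k => l ^ k * (INR b0 * m ^ k - 1/2))).
    { intros k. change (l ^ k * (INR b0 * m ^ k - 1/2) = l ^ k / q b0 m k). unfold q. assert (1 <= INR b0) by (apply (le_INR 1); lia).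
      assert (1 <= m ^ k) by (apply pow_R1_Rle; lra). field. nra. }
    apply geo_ser; auto.
Qed.
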